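(* Let $r\in\mathbb N_0$ and suppose Assumption (A1) holds with $k=0$. Then there is a constant $\kappa_r>0$, independent of $\tau_n$ and $n$, such that $$\sup_{t\in I_n}\|\varphi(t)\|\le\kappa_r\sum_{i=0}^r\Big\|\mathscr I_n\big[\varphi'(t)(1+T_n^{-1}(t))^i\big]+\delta_{0,i}\varphi(t_{n-1}^+)\Big\|\qquad\forall\varphi\in P_r(I_n,\mathbb R^d).$$
   Context: Mesh: $t_0<t_1<\dots<t_N$, $I_n=(t_{n-1},t_n]$, $\tau_n=t_n-t_{n-1}\le1$; $v(t_n^\pm)$ denote one-sided limits. $T_n(\hat t)=\frac{t_n+t_{n-1}}{2}+\frac{\tau_n}{2}\hat t$. $\|\cdot\|$ is the Euclidean norm on $\mathbb R^d$; $P_s$ denotes polynomials of degree at most $s$; $\delta_{i,j}$ is the Kronecker symbol. $\widehat{\mathscr I}$ is a linear functional (reference integrator) on $C^{k_{\mathscr I}}([-1,1])$ with local version $\mathscr I_n[\varphi]=\frac{\tau_n}{2}\widehat{\mathscr I}[\varphi\circ T_n]$, acting componentwise. Assumption (A1) for $k=0$: whenever $\hat\psi\in P_{r-1}([-1,1])$ satisfies $\widehat{\mathscr I}[(1+\hat t)\hat\psi\hat\varphi]=0$ for all $\hat\varphi\in P_{r-1}([-1,1])$, then $\hat\psi\equiv0$. *)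

(* Defs.v *)
From HB Require Import structures.
From mathcomp Require Import all_boot all_order all_algebra.
From mathcomp Require Import reals.
Set Implicit Arguments. Unset Strict Implicit. Unset Printing Implicit Defensive.
Import Order.TTheory GRing.Theory Num.Theory.
Local Open Scope ring_scope.

Section Defs.
Variable R : realType.

Definition enorm (d : nat) (v : 'I_d -> R) : R :=
  Num.sqrt (\sum_(j < d) v j ^+ 2).

(* T_n(that) = (t_n + t_{n-1})/2 + tau_n/2 * that, as a polynomial in that,
   with a = t_{n-1}, b = t_n *)
Definition Tpoly (a b : R) : {poly R} :=
  ((b + a) / 2)%:P + ((b - a) / 2)%:P * 'X.

Definition Tinvpoly (a b : R) : {poly R} :=
  (2 / (b - a))%:P * 'X - ((b + a) / (b - a))%:P.

(* local integrator I_n[phi] = tau_n/2 * Ihat[phi o T_n] (on polynomials) *)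
Definition Iloc (Ihat : {poly R} -> R) (a b : R) (q : {poly R}) : R :=
  (b - a) / 2 * Ihat (q \Po Tpoly a b).

(* Assumption (A1) with k = 0, for degree r: polynomials of degree <= r-1
   are those of size <= r (for r = 0 only the zero polynomial). *)
Definition A1_k0 (Ihat : {poly R} -> R) (r : nat) : Prop :=
  forall psi : {poly R}, (size psi <= r)%N ->
    (forall phi : {poly R}, (size phi <= r)%N ->
        Ihat (('X + 1) * psi * phi) = 0) ->
    psi = 0.

Definition is_linear_functional (Ihat : {poly R} -> R) : Prop :=
  (forall p q, Ihat (p + q) = Ihat p + Ihat q) /\
  (forall (c : R) p, Ihat (c *: p) = c * Ihat p).
End Defs.

(* Main.v *)
Require Import Defs.
From HB Require Import structures.
From mathcomp Require Import all_boot all_order all_algebra.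
From mathcomp Require Import reals ring lra.
Import Order.TTheory GRing.Theory Num.Theory.
Local Open Scope ring_scope.

Section Scalar.
Variables (R : realType) (Ihat : {poly R} -> R) (r : nat).
Hypothesis lin : is_linear_functional Ihat.
Hypothesis hA1 : A1_k0 Ihat r.

Definition Lf (i : nat) (p : {poly R}) : R :=
  Ihat (p^`() * (1 + 'X) ^+ i) + (i == 0)%:R * p.[-1].

Lemma Ihat0 : Ihat 0 = 0.
Proof.
have := (proj1 lin) 0 0; rewrite addr0 => /eqP; rewrite -subr_eq subrr => /eqP.
by [].
Qed.

Lemma Ihat_sum n (F : nat -> {poly R}) :
  Ihat (\sum_(k < n) F k) = \sum_(k < n) Ihat (F k).
Proof.
elim: n => [|n IH]; first by rewrite !big_ord0 Ihat0.
by rewrite !big_ord_recr /= (proj1 lin) IH.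
Qed.

Lemma Lf_lin i n (c : nat -> R) (F : nat -> {poly R}) :
  Lf i (\sum_(k < n) c k *: F k) = \sum_(k < n) c k * Lf i (F k).
Proof.
rewrite /Lf.
have -> : (\sum_(k < n) c k *: F k)^`() * (1 + 'X) ^+ i =
   \sum_(k < n) c k *: ((F k)^`() * (1 + 'X) ^+ i).
  rewrite raddf_sum /= big_distrl /=; apply: eq_bigr => k _.
  by rewrite derivZ scalerAl.
rewrite (big_morph Ihat (proj1 lin) Ihat0) horner_sum mulr_sumr -big_split /=; apply: eq_bigr => k _.
by rewrite (proj2 lin) hornerZ mulrDr; congr (_ + _); rewrite mulrCA.
Qed.

Lemma Lf_inj (p : {poly R}) : (size p <= r.+1)%N -> (forall i, (i <= r)%N -> Lf i p = 0) -> p = 0.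
Proof.
move=> sp hL.
have hd : p^`() = 0.
  apply: hA1.
    have [->|pn0] := eqVneq p 0; first by rewrite deriv0 size_poly0.
    by rewrite -ltnS (leq_trans (lt_size_deriv pn0) sp).
  move=> phi sphi.
  set u := phi \Po ('X + (-1)%:P).
  have su : (size u <= r)%N by rewrite /u size_comp_poly2 ?size_XaddC.
  have ephi : phi = u \Po ('X + 1).
    have -> : ('X + 1 : {poly R}) = 'X - (-1)%:P by rewrite polyCN opprK polyC1.
    by rewrite /u comp_polyXaddC_K.
  rewrite ephi comp_polyE mulr_sumr (big_morph Ihat (proj1 lin) Ihat0) big1 // => j _.
  rewrite -scalerAr (proj2 lin).
  have sj : (j.+1 <= r)%N by apply: leq_trans su.
  have hj := hL j.+1 sj; rewrite /Lf /= mul0r addr0 in hj.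
  suff -> : Ihat (('X + 1) * p^`() * ('X + 1) ^+ j) = 0 by rewrite mulr0.
  by rewrite -hj exprS mulrA [_ * p^`()]mulrC addrC.
have hc : p = (p`_0)%:P.
  apply/polyP => k; rewrite coefC; case: k => [//|k] /=.
  have := coef_deriv p k; rewrite hd coef0 => /esym/eqP.
  by rewrite mulrn_eq0 /= => /eqP.
have := hL 0%N (leq0n _); rewrite /Lf hd mul0r Ihat0 add0r mul1r.
by rewrite hc hornerC => ->.
Qed.


Lemma le_sum_term (n : nat) (F : 'I_n -> R) (j : 'I_n) :
  (forall i, 0 <= F i) -> F j <= \sum_(i < n) F i.
Proof.
move=> hF; rewrite (bigD1 j) //= lerDl; exact: sumr_ge0.
Qed.

Definition Amx : 'M[R]_(r.+1) := \matrix_(k, i) Lf i ('X^k).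
Definition Pc (c : 'rV[R]_(r.+1)) : {poly R} := \poly_(k < r.+1) c 0 (inord k).

Lemma Amx_Pc c (i : 'I_(r.+1)) : (c *m Amx) 0 i = Lf i (Pc c).
Proof.
rewrite /Pc poly_def (Lf_lin i r.+1 (fun k => c 0 (inord k)) (fun k => 'X^k)) !mxE.
by apply: eq_bigr => k _; rewrite !mxE inord_val.
Qed.

Lemma unit_Amx : Amx \in unitmx.
Proof.
rewrite unitmxE unitfE; apply/negP => /det0P [c /negP cn0 hc]; apply: cn0.
have P0 : Pc c = 0.
  apply: Lf_inj; first exact: size_poly.
  move=> i hi; have := Amx_Pc c (Ordinal (hi : (i < r.+1)%N)).
  by rewrite hc mxE.
apply/eqP/rowP => k; have := congr1 (fun q : {poly R} => q`_k) P0.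
by rewrite /Pc coef_poly ltn_ord inord_val coef0 !mxE.
Qed.

Lemma scalar_bound : exists K : R, 0 < K /\
  forall p : {poly R}, (size p <= r.+1)%N -> forall s : R, `|s| <= 1 ->
  `|p.[s]| <= K * \sum_(i < r.+1) `|Lf i p|.
Proof.
set Ai := invmx Amx.
set B := \sum_(l < r.+1) \sum_(k < r.+1) `|Ai l k|.
have B0 : 0 <= B by apply: sumr_ge0 => l _; apply: sumr_ge0.
exists ((r.+1)%:R * B + 1); split.
  by apply: ltr_wpDl => //; apply: mulr_ge0.
move=> p sp s hs.
set S := \sum_(i < r.+1) `|Lf i p|.
have S0 : 0 <= S by apply: sumr_ge0.
set c : 'rV[R]_(r.+1) := \row_k p`_k.
have pP : p = Pc c.
  apply/polyP => k; rewrite /Pc coef_poly; case: ltnP => hk.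
    by rewrite mxE inordK.
  by rewrite nth_default // (leq_trans sp hk).
have hcoef : forall k : 'I_(r.+1), `|p`_k| <= B * S.
  move=> k.
  have -> : p`_k = ((c *m Amx) *m Ai) 0 k by rewrite /Ai mulmxK ?unit_Amx // mxE.
  rewrite mxE (le_trans (ler_norm_sum _ _ _)) // mulr_sumr.
  apply: ler_sum => l _; rewrite normrM Amx_Pc -pP mulrC.
  apply: ler_wpM2r; first exact: normr_ge0.
  apply: (le_trans (le_sum_term _ (fun k => `|Ai l k|) k _)) => [i|]; first exact: normr_ge0.
  apply: (le_sum_term _ (fun l => \sum_(k < r.+1) `|Ai l k|) l) => i.
  by apply: sumr_ge0.
rewrite (horner_coef_wide _ sp) (le_trans (ler_norm_sum _ _ _)) //.
apply: le_trans (_ : \sum_(k < r.+1) (B * S) <= _).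
  apply: ler_sum => k _; rewrite normrM normrX.
  apply: le_trans (_ : `|p`_k| * 1 <= _); last by rewrite mulr1.
  apply: ler_wpM2l; first exact: normr_ge0.
  exact: exprn_ile1.
rewrite sumr_const card_ord mulrDl mul1r -mulrA mulr_natl lerDl //.
Qed.

End Scalar.



Lemma sum_sq_le (R : realType) n (F : 'I_n -> R) : (forall i, 0 <= F i) ->
  \sum_(i < n) F i ^+ 2 <= (\sum_(i < n) F i) ^+ 2.
Proof.
elim: n F => [|n IH] F hF; first by rewrite !big_ord0 expr0n.
rewrite !big_ord_recr /=.
have h := IH (fun i => F (widen_ord (leqnSn n) i)) (fun i => hF _).
have s0 : 0 <= \sum_(i < n) F (widen_ord (leqnSn n) i) by apply: sumr_ge0.
have := hF ord_max; set a := F ord_max; set s := \sum_(i < n) _ in h *.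
move=> a0; set q := \sum_(i < n) _ in h *.
have qa : 0 <= q * a by apply: mulr_ge0.
rewrite !expr2 in h *; nra.
Qed.

Lemma enorm_ge_abs (R : realType) d (v : 'I_d -> R) j : `|v j| <= enorm v.
Proof.
rewrite /enorm -sqrtr_sqr ler_sqrt; last by apply: sumr_ge0 => i _; apply: sqr_ge0.
by apply: (le_sum_term _ _ (fun i => v i ^+ 2)) => i; apply: sqr_ge0.
Qed.

Lemma enorm_le_sum (R : realType) d (v : 'I_d -> R) : enorm v <= \sum_j `|v j|.
Proof.
have s0 : 0 <= \sum_j `|v j| by apply: sumr_ge0.
rewrite /enorm -(ger0_norm s0) -sqrtr_sqr ler_sqrt; last exact: sqr_ge0.
rewrite (eq_bigr (fun j => `|v j| ^+ 2)); last by move=> j _; rewrite real_normK ?num_real.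
by apply: sum_sq_le => i; apply: normr_ge0.
Qed.

Theorem mainTheorem5 (R : realType) (r d : nat) (Ihat : {poly R} -> R) :
  is_linear_functional Ihat ->
  A1_k0 Ihat r ->
  exists kappa : R, 0 < kappa /\
    forall (a b : R), a < b -> b - a <= 1 ->
    forall phi : 'I_d -> {poly R}, (forall j, (size (phi j) <= r.+1)%N) ->
    forall t : R, a < t -> t <= b ->
      enorm (fun j => (phi j).[t]) <=
      kappa * \sum_(i < r.+1)
        enorm (fun j => Iloc Ihat a b ((phi j)^`() * (1 + Tinvpoly a b) ^+ i)
                        + (nat_of_ord i == 0%N)%:R * (phi j).[a]).
Proof.
move=> lin hA1.
have [K [K0 hK]] := scalar_bound R Ihat r lin hA1.
exists (K * (d.+1)%:R); split; first by apply: mulr_gt0; rewrite ?ltr0n.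
move=> a b ab _ phi sphi t hat tb.
set T := Tpoly a b.
set s := (Tinvpoly a b).[t].
have ba0 : b - a != 0 by rewrite subr_eq0 gt_eqF.
have ba1 : 0 < b - a by rewrite subr_gt0.
have Ts : T.[s] = t.
  rewrite /T /s /Tpoly /Tinvpoly !(hornerE, hornerD, hornerM, hornerC, hornerX, hornerN).
  by field.
have hs : `|s| <= 1.
  rewrite /s /Tinvpoly !(hornerE, hornerD, hornerM, hornerC, hornerX, hornerN).
  have -> : 2 / (b - a) * t - (b + a) / (b - a) = (2 * t - (b + a)) / (b - a) by field.
  rewrite ler_norml ler_pdivlMr // ler_pdivrMr //; apply/andP; split; lra.
have TinvT : Tinvpoly a b \Po T = 'X.
  rewrite /Tinvpoly /T /Tpoly comp_polyB comp_polyM comp_polyC comp_polyX.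
  rewrite mulrDr mulrA -!polyCM.
  have -> : 2 / (b - a) * ((b + a) / 2) = (b + a) / (b - a) by field.
  have -> : 2 / (b - a) * ((b - a) / 2) = 1 by field.
  by rewrite comp_polyC polyC1 mul1r [X in X - _]addrC addrK.
have Tm1 : T.[-1] = a.
  rewrite /T /Tpoly !(hornerE, hornerD, hornerM, hornerC, hornerX, hornerN). by field.
have dT : T^`() = ((b - a) / 2)%:P.
  by rewrite /T /Tpoly derivD derivC add0r mul_polyC derivZ derivX alg_polyC.
have hL : forall (j : 'I_d) (i : nat), Lf R Ihat i (phi j \Po T) =
    Iloc Ihat a b ((phi j)^`() * (1 + Tinvpoly a b) ^+ i) + (i == 0)%:R * (phi j).[a].
  move=> j i; rewrite /Lf /Iloc horner_comp Tm1; congr (_ + _).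
  rewrite comp_polyM rmorphXn rmorphD rmorph1 /= TinvT deriv_comp dT.
  rewrite -(proj2 lin); congr Ihat; rewrite -mul_polyC; ring.
have sT : forall j, (size (phi j \Po T) <= r.+1)%N.
  move=> j; rewrite size_comp_poly2 ?sphi //.
  rewrite /T /Tpoly addrC mul_polyC -mul_polyC size_MXaddC polyC_eq0.
  by rewrite mulf_eq0 invr_eq0 (negbTE ba0) pnatr_eq0 /= size_polyC mulf_neq0 ?invr_eq0 ?pnatr_eq0.
apply: (le_trans (enorm_le_sum _ _ _)).
apply: le_trans (_ : \sum_(j < d) (K * \sum_(i < r.+1) `|Lf R Ihat i (phi j \Po T)|) <= _).
  apply: ler_sum => j _.
  by rewrite -Ts -horner_comp; apply: hK.
rewrite -mulr_sumr -mulrA ler_wpM2l //; first exact: ltW.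
rewrite exchange_big /= mulr_sumr; apply: ler_sum => i _.
apply: le_trans (_ : \sum_(j < d) enorm (fun j => Iloc Ihat a b ((phi j)^`() * (1 + Tinvpoly a b) ^+ i)
                        + (nat_of_ord i == 0%N)%:R * (phi j).[a]) <= _).
  apply: ler_sum => j _; rewrite hL.
  exact: (enorm_ge_abs _ _ (fun j => Iloc Ihat a b ((phi j)^`() * (1 + Tinvpoly a b) ^+ i)
                        + (nat_of_ord i == 0%N)%:R * (phi j).[a])).
rewrite sumr_const card_ord -[_ *+ d]mulr_natl; apply: ler_wpM2r; last by rewrite ler_nat.
exact: sqrtr_ge0.
Qed.
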